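(* Let $A\subset\mathbb{R}$ be a Lebesgue measurable set and $a\in\mathbb{R}$. Then the following are equivalent: (i) every function $f:A\to\mathbb{R}$ which has a $T_6$ limit at $a$ has exactly one $T_6$ limit at $a$ (i.e. if $T_6\lim_{x\to a}f(x)=L_1$ and $T_6\lim_{x\to a}f(x)=L_2$ then $L_1=L_2$); (ii) $\left|\left((a-\delta,a+\delta)\setminus\{a\}\right)\cap A\right|>0$ for every real $\delta>0$.
   Context: $|K|$ denotes the Lebesgue measure of $K\subset\mathbb{R}$ (a set of measure zero means a Lebesgue null set, i.e. Lebesgue outer measure zero). For $A\subset\mathbb{R}$, $f:A\to\mathbb{R}$ and $a,L\in\mathbb{R}$, one writes $T_6\lim_{x\to a}f(x)=L$ if for every real $\varepsilon>0$ there exists a real $\delta_\varepsilon>0$ such that $\left|\left\{x\in\left((a-\delta_{\varepsilon},a+\delta_{\varepsilon})\setminus\{a\}\right)\cap A:\ |f(x)-L|\geq\varepsilon\right\}\right|=0$. *)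

(* Defs.v *)
From mathcomp Require Import all_boot all_order all_algebra.
From mathcomp Require Import all_classical all_reals all_analysis.
Set Implicit Arguments. Unset Strict Implicit. Unset Printing Implicit Defensive.
Import Order.TTheory GRing.Theory Num.Theory.
Local Open Scope classical_set_scope.
Local Open Scope ring_scope.

(* The real line equipped with the Lebesgue (= Caratheodory / completed)
   sigma-algebra; this is the domain of the library's
   [completed_lebesgue_measure] (which is the Lebesgue outer measure). *)
Definition LebR (R : realType) := caratheodory_type ((@wlength R idfun)^*)%mu.

Definition lebesgue_measurable {R : realType} (A : set R) : Prop :=
  @measurable _ (LebR R) A.

Definition leb_measure {R : realType} (K : set R) : \bar R :=
  (@completed_lebesgue_measure R : set (LebR R) -> \bar R) K.

Definition leb_null {R : realType} (K : set R) : Prop :=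
  (@completed_lebesgue_measure R).-negligible (K : set (LebR R)).

Definition punct_nbhs {R : realType} (A : set R) (a d : R) : set R :=
  ((`]a - d, a + d[%classic `\ a) `&` A).

(* T6 lim_{x -> a} f(x) = L, for f : A -> R represented as f : R -> R whose
   values outside A are irrelevant. *)
Definition T6_lim {R : realType} (A : set R) (f : R -> R) (a L : R) : Prop :=
  forall eps : R, 0 < eps -> exists2 d : R, 0 < d &
    leb_null [set x | punct_nbhs A a d x /\ eps <= `|f x - L|].

(* Main.v *)
Require Import Defs.
Set Implicit Arguments. Unset Strict Implicit.
From mathcomp Require Import all_boot all_order all_algebra.
From mathcomp Require Import all_classical all_reals all_analysis.
From mathcomp Require Import ring lra.
Import Order.TTheory GRing.Theory Num.Theory.
Local Open Scope classical_set_scope.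
Local Open Scope ring_scope.

Lemma leb_measureE (R : realType) (K : set R) :
  leb_measure K = ((@wlength R idfun)^*)%mu K.
Proof. by []. Qed.

Lemma null_measure0 (R : realType) (K : set R) :
  leb_null K -> leb_measure K = 0%E.
Proof.
move=> [B [mB B0 KB]]; apply/eqP; rewrite eq_le; apply/andP; split.
  rewrite -B0 !leb_measureE; exact: le_outer_measure.
by rewrite leb_measureE; exact: outer_measure_ge0.
Qed.

Lemma measure0_null (R : realType) (K : set R) :
  leb_measure K = 0%E -> leb_null K.
Proof.
move=> K0; exists K; split => //.
rewrite leb_measureE in K0.
apply: le_caratheodory_measurable => /= X.
apply: (@le_trans _ _ (((@wlength R idfun)^*)%mu K +
                       ((@wlength R idfun)^*)%mu (X `&` ~` K))).
  by rewrite leeD2r ?le_outer_measure//; exact: subIsetr.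
by rewrite K0 add0e le_outer_measure//; exact: subIsetl.
Qed.

Lemma nullS (R : realType) (K K' : set R) : K' `<=` K -> leb_null K -> leb_null K'.
Proof. by move=> KK [N [mN N0 KN]]; exists N; split => //; exact: subset_trans KN. Qed.

Lemma nullU (R : realType) (K K' : set R) : leb_null K -> leb_null K' -> leb_null (K `|` K').
Proof. exact: negligibleU. Qed.

Unset Implicit Arguments.
Theorem theorem5 (R : realType) (A : set R) (a : R) :
  lebesgue_measurable A ->
  ((forall (f : R -> R) (L1 L2 : R), T6_lim A f a L1 -> T6_lim A f a L2 -> L1 = L2)
   <-> (forall d : R, 0 < d -> (0 < leb_measure (punct_nbhs A a d))%E)).
Proof.
move=> _; split.
- move=> H d d0; rewrite lt0e; apply/andP; split; last first.
    by rewrite leb_measureE; exact: outer_measure_ge0.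
  apply/negP => /eqP N0.
  have := H (fun=> 0) 0 1.
  have T : forall L, T6_lim A (fun=> 0) a L.
    move=> L eps _; exists d => //.
    apply: (nullS _ (measure0_null N0)); by move=> x [].
  by move=> /(_ (T 0) (T 1)) /eqP; rewrite eq_sym oner_eq0.
- move=> H f L1 L2 h1 h2; apply/eqP/negPn/negP => neq.
  have e0 : 0 < `|L1 - L2| / 2 by rewrite divr_gt0 // normr_gt0 subr_eq0.
  have [d1 d10 n1] := h1 _ e0.
  have [d2 d20 n2] := h2 _ e0.
  have dm0 : 0 < Order.min d1 d2 by rewrite lt_min d10 d20.
  have := H _ dm0.
  rewrite null_measure0 ?ltxx //.
  apply: (nullS _ (nullU n1 n2)) => x [[Ix xa] Ax].
  set m := Num.min d1 d2.
  have [l r] : a - m < x /\ x < a + m.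
    by move: Ix; rewrite /= in_itv /= => /andP.
  have m1 : m <= d1 by rewrite /m ge_min lexx.
  have m2 : m <= d2 by rewrite /m ge_min lexx orbT.
  have I1 : `]a - d1, a + d1[%classic x.
    by rewrite /= in_itv /=; apply/andP; split; lra.
  have I2 : `]a - d2, a + d2[%classic x.
    by rewrite /= in_itv /=; apply/andP; split; lra.
  have tri : `|L1 - L2| <= `|f x - L1| + `|f x - L2|.
    have -> : L1 - L2 = (f x - L2) - (f x - L1) by ring.
    by rewrite [X in _ <= X]addrC; apply: (le_trans (ler_normB _ _)); rewrite lexx.
  case: (leP (`|L1 - L2| / 2) `|f x - L1|) => c1.
    by left; split => //; split => //; split.
  case: (leP (`|L1 - L2| / 2) `|f x - L2|) => c2.
    by right; split => //; split => //; split.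
  exfalso; move: tri c1 c2; set u := `|L1 - L2|; lra.
Qed.
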